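(* Let $x,y\in\mathbb{Z}_3$ be $3$-adic integers and let $v=(v_1,v_2,\dots)$ be a sequence in $\{0,1\}$ containing infinitely many $1$'s. If $v$ is a back tracing parity vector for both $x$ and $y$, then $x=y$. (In particular, this holds for positive integers $x,y$.)
   Context: On $\mathbb{Z}_3$ let $T_0^{-1}(z)=2z$, and for $z\equiv 2\pmod 3$ let $T_1^{-1}(z)=(2z-1)/3\in\mathbb{Z}_3$. A sequence $(v_1,v_2,\dots)\in\{0,1\}^{\mathbb{N}}$ is a back tracing parity vector for $x\in\mathbb{Z}_3$ if the sequence $x_0=x$, $x_i=T_{v_i}^{-1}(x_{i-1})$ ($i\ge 1$) is everywhere defined, i.e. $x_{i-1}\equiv 2\pmod 3$ whenever $v_i=1$. For a positive integer $x$ this agrees with: there are positive integers $x_0=x,x_1,x_2,\dots$ with $T(x_i)=x_{i-1}$ and $x_i\equiv v_i\pmod 2$, where $T(z)=z/2$ for $z$ even and $T(z)=(3z+1)/2$ for $z$ odd. *)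

(* Defs.v *)
From HB Require Import structures.
From mathcomp Require Import all_boot all_order all_algebra.
Set Implicit Arguments. Unset Strict Implicit. Unset Printing Implicit Defensive.
Import Order.TTheory GRing.Theory Num.Theory.
Local Open Scope ring_scope.

(* An element of Z_3: a sequence (a_n) of integers with a_{n+1} = a_n mod 3^n;
   a_n represents the residue of the 3-adic integer modulo 3^n. *)
Record Z3 := MkZ3 {
  z3seq :> nat -> int;
  z3coh : forall n : nat, (z3seq n.+1 = z3seq n %[mod (3 ^ n)%N])%Z
}.

Definition eqZ3 (x y : Z3) : Prop :=
  forall n : nat, (x n = y n %[mod (3 ^ n)%N])%Z.

Definition cong2mod3 (z : Z3) : Prop := (z 1%N = 2 %[mod 3%N])%Z.

(* w = T_b^{-1}(z), as a relation (T_1^{-1} is partial):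
   b = false : w = 2 z;
   b = true  : z = 2 (mod 3) and w = (2z - 1)/3, i.e. 3 w = 2 z - 1 in Z_3
               (3 is not a zero divisor in Z_3, so w is uniquely determined). *)
Definition TinvRel (b : bool) (z w : Z3) : Prop :=
  if b then cong2mod3 z /\
            (forall n : nat, (3 * w n = 2 * z n - 1 %[mod (3 ^ n)%N])%Z)
  else forall n : nat, (w n = 2 * z n %[mod (3 ^ n)%N])%Z.

(* v : nat -> bool, with v i standing for v_{i+1} of the paper.
   v is a back tracing parity vector for x: there are x_0 = x, x_1, ... in Z_3
   with x_{i+1} = T_{v_{i+1}}^{-1}(x_i), everywhere defined. *)
Definition back_tracing_pv (v : nat -> bool) (x : Z3) : Prop :=
  exists xs : nat -> Z3, xs 0%N = x /\
    forall i : nat, TinvRel (v i) (xs i) (xs i.+1).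

Definition infinitely_many_ones (v : nat -> bool) : Prop :=
  forall N : nat, exists i : nat, (N <= i)%N /\ v i = true.

(* Main.v *)
Require Import Defs.
From mathcomp Require Import all_boot all_order all_algebra.
From mathcomp Require Import ring.
Import GRing.Theory.
Local Open Scope ring_scope.

Definition eqk (k : nat) (a b : Z3) : Prop :=
  (((3 ^ k)%N : int) %| (a k - b k))%Z.

Lemma modD (d m n : int) : (m = n %[mod d])%Z -> (d %| (m - n))%Z.
Proof. by move=> h; rewrite -eqz_mod_dvd h. Qed.

Lemma cop2 k : coprimez ((3 ^ k)%N : int) 2.
Proof. by rewrite coprimezE /= coprimeXl. Qed.

Lemma eqk_weaken k a b : eqk k.+1 a b -> eqk k a b.
Proof.
move=> h; rewrite /eqk.
have e : a k - b k = (a k - a k.+1) + (a k.+1 - b k.+1) + (b k.+1 - b k).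
  by ring.
rewrite e; apply: rpredD; first apply: rpredD.
- by rewrite -opprB rpredN; apply: modD; apply: z3coh.
- apply: dvdz_trans h; rewrite expnS PoszM; exact: dvdz_mull.
- exact/modD/z3coh.
Qed.

Lemma step_false k z z' w w' :
  TinvRel false z w -> TinvRel false z' w' -> eqk k w w' -> eqk k z z'.
Proof.
move=> /= hw hw' h; rewrite /eqk.
rewrite -(Gauss_dvdzr _ (cop2 k)).
have e : 2 * (z k - z' k) = (w k - w' k) - (w k - 2 * z k) + (w' k - 2 * z' k).
  by ring.
rewrite e; apply: rpredD; first apply: rpredB => //.
- exact/modD/hw.
- exact/modD/hw'.
Qed.

Lemma step_true k z z' w w' :
  TinvRel true z w -> TinvRel true z' w' -> eqk k w w' -> eqk k.+1 z z'.
Proof.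
move=> /= [_ hw] [_ hw'] h; rewrite /eqk.
rewrite -(Gauss_dvdzr _ (cop2 k.+1)).
have h3 : (((3 ^ k.+1)%N : int) %| 3 * (w k.+1 - w' k.+1))%Z.
  rewrite expnS PoszM; apply: dvdz_mul => //.
  have e : w k.+1 - w' k.+1 = (w k.+1 - w k) + (w k - w' k) + (w' k - w' k.+1).
    by ring.
  rewrite e; apply: rpredD; first apply: rpredD => //.
  - exact/modD/z3coh.
  - by rewrite -opprB rpredN; apply: modD; apply: z3coh.
have e : 2 * (z k.+1 - z' k.+1) = 3 * (w k.+1 - w' k.+1)
    - (3 * w k.+1 - (2 * z k.+1 - 1)) + (3 * w' k.+1 - (2 * z' k.+1 - 1)).
  by ring.
rewrite e; apply: rpredD; first apply: rpredB => //.
- exact/modD/hw.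
- exact/modD/hw'.
Qed.

Lemma step_any k b z z' w w' :
  TinvRel b z w -> TinvRel b z' w' -> eqk k w w' -> eqk k z z'.
Proof.
case: b => hw hw' h; last exact: (@step_false k z z' w w' hw hw' h).
apply: eqk_weaken; exact: (@step_true k z z' w w' hw hw' h).
Qed.

Theorem mainTheorem7 (x y : Z3) (v : nat -> bool) :
  infinitely_many_ones v ->
  back_tracing_pv v x -> back_tracing_pv v y ->
  eqZ3 x y.
Proof.
move=> hinf [xs [hx0 hx]] [ys [hy0 hy]].
have key : forall m i, eqk m (xs i) (ys i).
  elim=> [|m IH] i; first by rewrite /eqk expn0 dvd1z.
  have [j [hij hj]] := hinf i.
  have hjm : eqk m.+1 (xs j) (ys j).
    have := hx j; have := hy j; rewrite hj => hyj hxj.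
    exact: (@step_true m _ _ _ _ hxj hyj (IH j.+1)).
  have : forall d i', (i' + d = j)%N -> eqk m.+1 (xs i') (ys i').
    elim=> [|d IHd] i' e; first by rewrite addn0 in e; rewrite e.
    apply: (@step_any _ _ _ _ _ _ (hx i') (hy i')); apply: IHd; rewrite addSnnS; exact: e.
  move=> H; exact: (H (j - i)%N i (subnKC hij)).
move=> n; have := key n 0%N; rewrite hx0 hy0 /eqk => H; apply/eqP; rewrite eqz_mod_dvd; exact: H.
Qed.
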